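(* The contravariant functor $\partial\mathrm{Spec}\colon\mathsf{Ring}\to\mathsf{Set}$ is naturally isomorphic to the contravariant functor $R\mapsto \varprojlim_{C\in\mathcal{C}(R)^{\mathrm{op}}}\operatorname{Spec}(C)$, and this isomorphism is compatible with the identification $\partial\mathrm{Spec}|_{\mathsf{CommRing}}=\operatorname{Spec}$.
   Context: Rings are unital and homomorphisms unital. For a ring $R$, a subset $I\subseteq R$ is a partial ideal if for all commuting $a,b\in R$: $a,b\in I\Rightarrow a+b\in I$, and $b\in I\Rightarrow ab\in I$; it is prime if $I\neq R$ and for commuting $x,y$, $xy\in I$ implies $x\in I$ or $y\in I$. $\partial\mathrm{Spec}(R)$ is the set of prime partial ideals of $R$, with $\partial\mathrm{Spec}(f)(P)=f^{-1}(P)$ for a homomorphism $f$. $\mathcal{C}(R)$ is the poset of commutative subrings of $R$ under inclusion, viewed as a category; the limit is of the diagram sending $C$ to $\operatorname{Spec}(C)$ and an inclusion $C\subseteq C'$ to the map $\operatorname{Spec}(C')\to\operatorname{Spec}(C)$, $Q\mapsto Q\cap C$. On a homomorphism $R\to S$ the limit functor acts by the induced maps (a commutative subring of $R$ maps into a commutative subring of $S$). *)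

(* Defs.v *)
From HB Require Import structures.
From mathcomp Require Import all_boot all_order all_algebra.
Set Implicit Arguments.
Unset Strict Implicit.
Unset Printing Implicit Defensive.
Import GRing.Theory.
Local Open Scope ring_scope.

(* Rings are unital, possibly zero rings: pzRingType.  Homomorphisms are
   unital ring morphisms: {rmorphism R -> S}.  Subsets are Prop predicates. *)

Section Defs.
Variable R : pzRingType.

Definition partial_ideal (I : R -> Prop) : Prop :=
  I 0 /\
  forall a b : R, a * b = b * a ->
    (I a -> I b -> I (a + b)) /\ (I b -> I (a * b)).

Definition prime_partial_ideal (I : R -> Prop) : Prop :=
  partial_ideal I /\ ~ (forall x, I x) /\
  forall x y : R, x * y = y * x -> I (x * y) -> I x \/ I y.

Definition pspec := {P : R -> Prop | prime_partial_ideal P}.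

Definition comm_subring (C : R -> Prop) : Prop :=
  [/\ C 1,
      (forall x y, C x -> C y -> C (x - y)),
      (forall x y, C x -> C y -> C (x * y)) &
      (forall x y, C x -> C y -> x * y = y * x)].

Definition csub := {C : R -> Prop | comm_subring C}.

Definition prime_ideal_of (C Q : R -> Prop) : Prop :=
  (forall x, Q x -> C x) /\
  [/\ Q 0,
      (forall x y, Q x -> Q y -> Q (x + y)),
      (forall c x, C c -> Q x -> Q (c * x)),
      ~ (forall x, C x -> Q x) &
      (forall x y, C x -> C y -> Q (x * y) -> Q x \/ Q y)].

(* lim_{C in C(R)^op} Spec(C): compatible families, with transition maps
   Spec(C') -> Spec(C), Q |-> Q \cap C for C \subseteq C'. *)
Definition plim :=
  {Q : csub -> (R -> Prop) |
     (forall C : csub, prime_ideal_of (sval C) (Q C)) /\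
     (forall C C' : csub, (forall x, sval C x -> sval C' x) ->
        forall x, (Q C' x /\ sval C x) <-> Q C x)}.

Definition csub_top_subproof (HR : forall x y : R, x * y = y * x) :
  comm_subring (fun _ => True).
Proof. by split. Qed.

End Defs.

Arguments csub_top_subproof {R}.

Definition csub_top (R : comPzRingType) : csub R :=
  exist _ (fun _ => True) (csub_top_subproof (@mulrC R)).

Section Maps.
Variables (R S : pzRingType) (f : {rmorphism R -> S}).

Lemma pspec_map_subproof (P : pspec S) :
  prime_partial_ideal (fun x : R => sval P (f x)).
Proof.
case: P => P /= [[P0 Pid] [Pne Pprime]].
have comm a b : a * b = b * a -> f a * f b = f b * f a.
  by move=> e; rewrite -!rmorphM e.
split; [split|split].
- by rewrite rmorph0.
- move=> a b /comm /Pid [HD HM]; split.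
  + by move=> ha hb; rewrite rmorphD; apply: HD.
  + by move=> hb; rewrite rmorphM; apply: HM.
- move=> Hall; apply: Pne => y.
  have := Hall 1; rewrite rmorph1 => P1.
  have [_ HM] : _ /\ _ := Pid y 1 ltac:(by rewrite mulr1 mul1r).
  by have := HM P1; rewrite mulr1.
- move=> x y /comm e; rewrite rmorphM; exact: Pprime.
Qed.

Definition pspec_map (P : pspec S) : pspec R :=
  exist _ _ (pspec_map_subproof P).

Lemma img_csub_subproof (C : csub R) :
  comm_subring (fun y : S => exists2 x, sval C x & f x = y).
Proof.
case: C => C [C1 CB CM Cc] /=; split.
- by exists 1 => //; rewrite rmorph1.
- by move=> _ _ [x hx <-] [y hy <-]; exists (x - y); [apply: CB|rewrite rmorphB].
- by move=> _ _ [x hx <-] [y hy <-]; exists (x * y); [apply: CM|rewrite rmorphM].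
- by move=> _ _ [x hx <-] [y hy <-]; rewrite -!rmorphM Cc.
Qed.

Definition img_csub (C : csub R) : csub S := exist _ _ (img_csub_subproof C).

(* action of the limit functor on underlying families:
   (Q_D)_{D in C(S)} |-> (f|_C^{-1}(Q_{f(C)}))_{C in C(R)} *)
Definition plim_map_fam (Q : csub S -> (S -> Prop)) : csub R -> (R -> Prop) :=
  fun C x => sval C x /\ Q (img_csub C) (f x).

End Maps.

(* Main.v *)
Require Import Defs.
From HB Require Import structures.
From mathcomp Require Import all_boot all_order all_algebra.
From Stdlib Require Import FunctionalExtensionality PropExtensionality ProofIrrelevance.
Import GRing.Theory.
Local Open Scope ring_scope.

Section Aux.
Variable R : pzRingType.

Definition dc (X : R -> Prop) : R -> Prop :=
  fun z => forall w, (forall y, X y -> w * y = y * w) -> z * w = w * z.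

Lemma dc_csub (X : R -> Prop) :
  (forall a b, X a -> X b -> a * b = b * a) -> comm_subring (dc X).
Proof.
move=> HX; split.
- by move=> w _; rewrite mul1r mulr1.
- move=> x y hx hy w hw; rewrite mulrBl mulrBr hx // hy //.
- move=> x y hx hy w hw; by rewrite -mulrA hy // mulrA hx // mulrA.
- move=> x y hx hy; apply: hx => z hz; apply: hy => u hu; exact: HX.
Qed.

Lemma dc_sub (X : R -> Prop) y : X y -> dc X y.
Proof. by move=> hy w hw; rewrite hw. Qed.

Definition dcs {X : R -> Prop} (HX : forall a b, X a -> X b -> a * b = b * a) : csub R :=
  exist _ _ (@dc_csub X HX).

Lemma one_comm (a : R) : forall x y, x = a -> y = a -> x * y = y * x.
Proof. by move=> x y -> ->. Qed.

Lemma two_comm (a b : R) : a * b = b * a ->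
  forall x y, x = a \/ x = b -> y = a \/ y = b -> x * y = y * x.
Proof. by move=> e x y [->|->] [->|->]. Qed.

Lemma cap_csub (C D : csub R) : comm_subring (fun x => sval C x /\ sval D x).
Proof.
case: C => C [C1 CB CM Cc]; case: D => D [D1 DB DM Dc] /=; split.
- by [].
- by move=> x y [? ?] [? ?]; split; [apply: CB|apply: DB].
- by move=> x y [? ?] [? ?]; split; [apply: CM|apply: DM].
- by move=> x y [? ?] [? ?]; apply: Cc.
Qed.

Definition capc (C D : csub R) : csub R := exist _ _ (cap_csub C D).

Lemma key (Q : plim R) (C D : csub R) x :
  sval Q C x -> sval D x -> sval Q D x.
Proof.
case: Q => Q [HP Hc] /= hC hD.
have hx : sval C x by case: (HP C) => + _; apply.
have h1 : Q (capc C D) x.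
  by apply/(Hc (capc C D) C (fun z h => proj1 h)).
have := (Hc (capc C D) D (fun z h => proj2 h) x).2 h1; by case.
Qed.

Arguments key {Q C D x}.

Lemma csub0 (C : csub R) : sval C 0.
Proof. case: C => C [C1 CB _ _] /=; by rewrite -(subrr 1); apply: CB. Qed.

Lemma phi_ok (P : pspec R) :
  (forall C : csub R, prime_ideal_of (sval C) (fun x => sval C x /\ sval P x)) /\
  (forall C C' : csub R, (forall x, sval C x -> sval C' x) ->
     forall x, ((sval C' x /\ sval P x) /\ sval C x) <-> (sval C x /\ sval P x)).
Proof.
case: P => P [[P0 Pid] [Pne Ppr]] /=; split; last first.
  by move=> C C' s x; split; [case=> [[]]|case=> h1 h2; split; [split; [apply: s|]|]].
move=> C0; have Z := csub0 C0.
case: C0 Z => C [C1 CB CM Cc] /= Z; split; first by move=> x [].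
split.
- by [].
- move=> x y [hx px] [hy py]; split.
    by rewrite -[y]opprK; apply: (CB) => //; rewrite -sub0r; apply: (CB).
  by apply: (Pid x y (Cc _ _ hx hy)).1.
- move=> c x hc [hx px]; split; first exact: CM.
  by apply: (Pid c x (Cc _ _ hc hx)).2.
- move=> Hall; apply: Pne => y; have [_ p1] := Hall 1 C1.
  by have := (Pid y 1 ltac:(by rewrite mulr1 mul1r)).2 p1; rewrite mulr1.
- move=> x y hx hy [_ pxy].
  by case: (Ppr x y (Cc _ _ hx hy) pxy) => h; [left|right].
Qed.

Definition phi (P : pspec R) : plim R := exist _ _ (phi_ok P).

Lemma psi_ok (Q : plim R) : prime_partial_ideal (fun x => exists C, sval Q C x).
Proof.
have HP := proj1 (proj2_sig Q).
have inC C x : sval Q C x -> sval C x by case: (HP C) => + _; apply.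
split; [split|split].
- exists (dcs (@one_comm 0)); by case: (HP (dcs (@one_comm 0))) => _ [].
- move=> a b e; set D := dcs (@two_comm _ _ e).
  have Da : sval D a by apply: dc_sub; left.
  have Db : sval D b by apply: dc_sub; right.
  case: (HP D) => _ [_ Hadd Hmul _ _]; split.
  + move=> [C1 h1] [C2 h2]; exists D; apply: Hadd; [exact: key h1 Da|exact: key h2 Db].
  + move=> [C2 h2]; exists D; apply: Hmul => //; exact: key h2 Db.
- move=> Hall; have [C h] := Hall 1.
  case: (HP C) => _ [_ _ Hmul Hne _]; apply: Hne => c hc.
  by have := Hmul c 1 hc h; rewrite mulr1.
- move=> x y e [C h]; set D := dcs (@two_comm _ _ e).
  have Dx : sval D x by apply: dc_sub; left.
  have Dy : sval D y by apply: dc_sub; right.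
  have Dxy : sval D (x * y).
    by case: (proj2_sig D) => _ _ hm _; apply: hm.
  case: (HP D) => _ [_ _ _ _ Hpr].
  by case: (Hpr x y Dx Dy (key h Dxy)) => h'; [left|right]; exists D.
Qed.

Definition psi (Q : plim R) : pspec R := exist _ _ (psi_ok Q).

Lemma phi_bij : bijective phi.
Proof.
exists psi.
- move=> P; apply: eq_sig_hprop; first by move=> ?; apply: proof_irrelevance.
  apply: functional_extensionality => x; apply: propositional_extensionality.
  split; first by move=> [C [_ h]].
  move=> h; exists (dcs (@one_comm x)); split => //; exact: dc_sub.
- move=> Q; apply: eq_sig_hprop; first by move=> ?; apply: proof_irrelevance.
  apply: functional_extensionality => C; apply: functional_extensionality => x.
  apply: propositional_extensionality; split.
  + by move=> [hC [D h]]; apply: key h hC.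
  + move=> h; split; last by exists C.
    by case: (proj1 (proj2_sig Q) C) => + _; apply.
Qed.

End Aux.

Theorem proposition2p14 :
  exists phi : forall R : pzRingType, pspec R -> plim R,
    (* each component is a bijection *)
    (forall R : pzRingType, bijective (phi R)) /\
    (* naturality: lim(f) o phi_S = phi_R o \partial Spec(f) *)
    (forall (R S : pzRingType) (f : {rmorphism R -> S}) (P : pspec S)
            (C : csub R) (x : R),
        sval (phi R (pspec_map f P)) C x <->
        plim_map_fam f (sval (phi S P)) C x) /\
    (* compatibility with \partial Spec|_CommRing = Spec: for commutative R,
       composing phi_R with the limit projection to the top C = R gives P |-> P *)
    (forall (R : comPzRingType) (P : pspec R) (x : R),
        sval (phi R P) (csub_top R) x <-> sval P x).
Proof.
exists phi; split; first exact: phi_bij.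
split.
- move=> R S f P C x /=; rewrite /plim_map_fam /=; split.
  + by move=> [hC hP]; split => //; split => //; exists x.
  + by move=> [hC [_ hP]].
- by move=> R P x /=; split; [case|].
Qed.
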